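(* (Ratio Test for Series with Unit Coefficients.) Let $\mathcal{A}$ be a finite-dimensional real associative commutative unital algebra with norm $\|\cdot\|$ and constant $m_{\mathcal{A}}>0$ such that $\|x\star y\|\le m_{\mathcal{A}}\|x\|\|y\|$ for all $x,y$. Consider a power series $\sum c_n\star(z-z_0)^n$ with $z_0\in\mathcal{A}$ and $c_n\in\mathcal{A}^\times$ for all $n$. Let $\alpha=\limsup_{n\to\infty}\left\|\frac{c_{n+1}}{c_n}\right\|$ and $R=\frac{1}{m_{\mathcal{A}}^2\alpha}$. Then $\sum c_n\star(z-z_0)^n$ is absolutely convergent for all $z$ with $z-z_0\in\mathcal{A}^\times$ and $\|z-z_0\|<R$. Moreover, if $\alpha=0$ then $\sum c_n\star(z-z_0)^n$ converges absolutely on all of $\mathcal{A}$.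
   Context: $\mathcal{A}^\times$ is the group of units of $\mathcal{A}$; $\frac{a}{b}=a\star b^{-1}$ for $b\in\mathcal{A}^\times$. Absolute convergence of $\sum a_n$ means convergence of $\sum\|a_n\|$. Convention $R=\infty$ when $\alpha=0$. *)

(* Defs.v *)
From HB Require Import structures.
From mathcomp Require Import all_boot all_order all_algebra all_field.
From mathcomp Require Import all_classical all_reals all_analysis.
Set Implicit Arguments. Unset Strict Implicit. Unset Printing Implicit Defensive.
Import Order.TTheory GRing.Theory Num.Theory numFieldNormedType.Exports.
Local Open Scope ring_scope.

Definition is_norm (R : realType) (A : lmodType R) (nrm : A -> R) : Prop :=
  [/\ forall x, 0 <= nrm x,
      forall x, nrm x = 0 -> x = 0,
      forall (a : R) x, nrm (a *: x) = `|a| * nrm x &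
      forall x y, nrm (x + y) <= nrm x + nrm y].

Definition ratio_limsup (R : realType) (A : falgType R) (nrm : A -> R)
  (c : nat -> A) : \bar R :=
  limn_esup (fun n => (nrm (c n.+1 / c n))%:E).

Definition ratio_radius (R : realType) (m : R) (alpha : \bar R) : \bar R :=
  match alpha with
  | EFin a => if a == 0 then +oo%E else ((m ^+ 2 * a)^-1)%:E
  | +oo%E => 0%E
  | -oo%E => +oo%E
  end.

Definition abs_convergent (R : realType) (A : Type) (nrm : A -> R)
  (a : nat -> A) : Prop :=
  cvgn (series (fun n => nrm (a n))).

(* Main.v *)
Require Import Defs.
From HB Require Import structures.
From mathcomp Require Import all_boot all_order all_algebra all_field.
From mathcomp Require Import all_classical all_reals all_analysis.
From mathcomp Require Import ring lra.
Import Order.TTheory GRing.Theory Num.Theory.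
Local Open Scope ring_scope.

Lemma esup_lt_ev (R : realType) (u : (\bar R)^nat) b :
  (limn_esup u < b)%E -> exists N, forall n, (N <= n)%N -> (u n < b)%E.
Proof.
rewrite limn_esup_lim.
have -> : limn (esups u) = ereal_inf (range (esups u)).
  by apply/cvg_lim => //; exact: cvg_esups_inf.
move=> /ereal_inf_lt [_ [N _ <-]] hN.
exists N => n Nn; apply: le_lt_trans hN; apply: ereal_sup_ubound; exists n => //.
Qed.

Lemma exb (R : realType) (m a nw : R) : 0 < m -> 0 <= a -> 0 <= nw ->
  m^+2 * a * nw < 1 -> exists b, a < b /\ m^+2 * b * nw < 1.
Proof.
move=> m0 a0 nw0 t1.
set t := m^+2 * a * nw.
have m20 : 0 < m^+2 by rewrite exprn_gt0.
exists (a + (1 - t) / (m^+2 * (nw + 1))); split.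
  rewrite ltrDl divr_gt0 ?subr_gt0 // mulr_gt0 //; lra.
have -> : m^+2 * (a + (1 - t) / (m^+2 * (nw + 1))) * nw
   = t + (1 - t) * (nw / (nw + 1)).
  rewrite /t; field; apply/andP; split; rewrite gt_eqF //; lra.
have s1 : nw / (nw + 1) < 1 by rewrite ltr_pdivrMr; lra.
have s0 : 0 <= nw / (nw + 1) by rewrite divr_ge0 //; lra.
have : 0 < (1 - t) * (1 - nw / (nw + 1)) by rewrite mulr_gt0 // subr_gt0.
lra.
Qed.
Lemma key (R : realType) (A : falgType R) (nrm : A -> R) (mA : R)
  (hnorm : is_norm nrm) (hm : 0 < mA)
  (hmul : forall x y : A, nrm (x * y) <= mA * nrm x * nrm y)
  (c : nat -> A) (hc : forall n, c n \is a GRing.unit) (w : A) (b : R) (N : nat) :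
  (forall n, (N <= n)%N -> nrm (c n.+1 / c n) < b) ->
  mA ^+ 2 * b * nrm w < 1 ->
  abs_convergent nrm (fun n => c n * w ^+ n).
Proof.
move=> hb hq.
case: hnorm => nrm0 _ _ _.
set a := fun n => c n * w ^+ n.
set q := mA ^+ 2 * b * nrm w.
have b0 : 0 < b by apply: le_lt_trans (hb N (leqnn N)).
have q0 : 0 <= q by rewrite /q !mulr_ge0 // ?exprn_ge0 // ltW.
set q' := (1 + q) / 2.
have q'0 : 0 < q' by rewrite /q'; lra.
have hq1 : q < 1 := hq.
have q'1 : q' < 1 by rewrite /q'; lra.
have qq' : q <= q' by rewrite /q'; lra.
have step : forall n, (N <= n)%N -> nrm (a n.+1) <= q' * nrm (a n).
  move=> n Nn.
  have -> : a n.+1 = (c n.+1 / c n) * (a n * w).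
    by rewrite /a exprSr -{1}(divrK (hc n) (c n.+1)) !mulrA.
  apply: (le_trans (hmul _ _)).
  have h2 := hmul (a n) w.
  have hr := hb n Nn.
  have hr0 := nrm0 (c n.+1 / c n).
  have ha0 := nrm0 (a n).
  have hw0 := nrm0 w.
  apply: (le_trans (y := mA * nrm (c n.+1 / c n) * (mA * nrm (a n) * nrm w))).
    by rewrite ler_wpM2l // mulr_ge0 // ltW.
  apply: (le_trans (y := q * nrm (a n))); last by rewrite ler_wpM2r.
  have -> : mA * nrm (c n.+1 / c n) * (mA * nrm (a n) * nrm w)
     = (mA^+2 * nrm w * nrm (a n)) * nrm (c n.+1 / c n) by ring.
  have -> : q * nrm (a n) = (mA^+2 * nrm w * nrm (a n)) * b by rewrite /q; ring.
  by rewrite ler_wpM2l ?(ltW hr) // !mulr_ge0 // ?exprn_ge0 // ?ltW.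
set C := \sum_(k < N.+1) nrm (a k) / q' ^+ k.
have C0 : 0 <= C by rewrite sumr_ge0 // => k _; rewrite divr_ge0 // exprn_ge0 // ltW.
have small : forall n, (n <= N)%N -> nrm (a n) <= C * q' ^+ n.
  move=> j jN.
  rewrite -ler_pdivrMr ?exprn_gt0 //.
  rewrite /C (bigD1 (Ordinal (n := N.+1) (m := j) jN)) //=.
  by rewrite lerDl sumr_ge0 // => k _; rewrite divr_ge0 // exprn_ge0 // ltW.
have bound : forall n, nrm (a n) <= C * q' ^+ n.
  move=> n; case: (leqP n N) => [|/ltnW]; first exact: small.
  move/subnKC <-; elim: (n - N)%N => [|k IH]; first by rewrite addn0; apply: small.
  rewrite addnS; apply: (le_trans (step _ (leq_addr _ _))).
  by rewrite exprS mulrCA ler_wpM2l // ltW.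
rewrite /abs_convergent.
apply: (series_le_cvg (v_ := geometric C q')).
- by move=> n; apply: nrm0.
- by move=> n; rewrite /= mulr_ge0 // exprn_ge0 // ltW.
- exact: bound.
- by apply: is_cvg_geometric_series; rewrite ger0_norm // ltW.
Qed.

Theorem theorem5p9 (R : realType) (A : falgType R) (nrm : A -> R) (mA : R)
  (hcomm : forall x y : A, x * y = y * x)
  (hnorm : is_norm nrm) (hm : 0 < mA)
  (hmul : forall x y : A, nrm (x * y) <= mA * nrm x * nrm y)
  (c : nat -> A) (z0 : A)
  (hc : forall n, c n \is a GRing.unit) :
  (forall z : A, z - z0 \is a GRing.unit ->
     ((nrm (z - z0))%:E < ratio_radius mA (ratio_limsup nrm c))%E ->
     abs_convergent nrm (fun n => c n * (z - z0) ^+ n))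
  /\
  (ratio_limsup nrm c = 0%E ->
     forall z : A, abs_convergent nrm (fun n => c n * (z - z0) ^+ n)).
Proof.
have nrm0 : forall x, 0 <= nrm x by case: hnorm.
have key2 : forall w : A, (exists b : R, (ratio_limsup nrm c < b%:E)%E /\
     mA ^+ 2 * b * nrm w < 1) -> abs_convergent nrm (fun n => c n * w ^+ n).
  move=> w [b [hb hq]].
  have [N hN] := (@esup_lt_ev R _ _ hb).
  apply: (@key R A nrm mA hnorm hm hmul c hc w b N) => //.
have zero : forall w : A, exists b : R, (0 < b) /\ mA ^+ 2 * b * nrm w < 1.
  move=> w; apply: exb => //; rewrite mulr0 mul0r; lra.
split.
- move=> z _; move: (z - z0) => w.
  rewrite /ratio_radius; case E: (ratio_limsup nrm c) => [a| |] h; apply: key2.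
  + case: eqP h => [a0 _ | an0 h].
      have [b [b0 hb]] := zero w; exists b; split => //; by rewrite E a0 lte_fin.
    rewrite lte_fin in h.
    have m20 : 0 < mA ^+ 2 by rewrite exprn_gt0.
    have a0 : 0 < a.
      rewrite lt_neqAle eq_sym; apply/andP; split; first by apply/eqP.
      rewrite leNgt; apply/negP => an.
      have : (mA ^+ 2 * a)^-1 < 0 by rewrite invr_lt0 pmulr_rlt0.
      have := nrm0 w; lra.
    have t1 : mA ^+ 2 * a * nrm w < 1.
      have k0 : 0 < mA ^+ 2 * a by rewrite mulr_gt0.
      by rewrite -(mulfV (lt0r_neq0 k0)) ltr_pM2l.
    have [b [ab hb]] := @exb R mA a (nrm w) hm (ltW a0) (nrm0 w) t1.
    by exists b; split => //; rewrite E lte_fin.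
  + by move: h; rewrite lte_fin ltNge nrm0.
  + have [b [b0 hb]] := zero w; exists b; split => //; by rewrite E ltNyr.
- move=> h0 z; apply: key2; rewrite h0.
  have [b [b0 hb]] := zero (z - z0); exists b; split => //; by rewrite lte_fin.
Qed.
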